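(* For every $\delta\in\mathcal{D}^{LSL}$, Gini's gamma, Spearman's footrule and Blomqvist's beta of $S_\delta$ are given by $$\gamma(S_\delta)=4\int_{[0,\frac12]}\Big(\delta(x)+x\tfrac{\delta(1-x)}{1-x}\Big)\,d\lambda(x)+4\int_{[\frac12,1]}\tfrac{\delta(x)}{x}\,d\lambda(x)-2,$$ $$\phi(S_\delta)=6\int_{[0,1]}\delta(x)\,d\lambda(x)-2,\qquad \beta(S_\delta)=4\,\delta(\tfrac12)-1,$$ and they fulfill $\gamma(S_\delta),\phi(S_\delta),\beta(S_\delta)\in[0,1]$.
   Context: $\lambda$ is Lebesgue measure on $[0,1]$. Let $\mathcal{D}$ be the set of all functions $\delta:[0,1]\to[0,1]$ with $\delta(u)\le u$, $\delta(1)=1$, $\delta$ non-decreasing and 2-Lipschitz. Let $\mathcal{D}^{LSL}$ be the set of $\delta\in\mathcal{D}$ such that $x\mapsto\delta(x)/x$ is non-decreasing and $x\mapsto\delta(x)/x^2$ is non-increasing on $(0,1]$. For $\delta\in\mathcal{D}^{LSL}$, $S_\delta(x,y)=y\,\delta(x)/x$ if $y\le x$ and $x\,\delta(y)/y$ otherwise (convention $0/0:=0$); it is a copula. For a copula $C$: Gini's gamma $\gamma(C)=4\int_{[0,1]}C(x,x)\,d\lambda(x)+4\int_{[0,1]}C(x,1-x)\,d\lambda(x)-2$, Spearman's footrule $\phi(C)=6\int_{[0,1]}C(x,x)\,d\lambda(x)-2$, Blomqvist's beta $\beta(C)=4C(\tfrac12,\tfrac12)-1$. *)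

(* Defs.v *)
From HB Require Import structures.
From mathcomp Require Import all_boot all_order all_algebra.
From mathcomp Require Import all_classical all_reals all_analysis.
Set Implicit Arguments. Unset Strict Implicit. Unset Printing Implicit Defensive.
Import Order.TTheory GRing.Theory Num.Theory.
Local Open Scope classical_set_scope.
Local Open Scope ring_scope.

Section Defs.
Variable R : realType.

Definition in_D (delta : R -> R) : Prop :=
  (forall u, 0 <= u <= 1 -> 0 <= delta u <= 1) /\
  (forall u, 0 <= u <= 1 -> delta u <= u) /\
  delta 1 = 1 /\
  (forall u v, 0 <= u -> u <= v -> v <= 1 -> delta u <= delta v) /\
  (forall u v, 0 <= u <= 1 -> 0 <= v <= 1 -> `|delta u - delta v| <= 2 * `|u - v|).

Definition in_DLSL (delta : R -> R) : Prop :=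
  in_D delta /\
  (forall x y, 0 < x -> x <= y -> y <= 1 -> delta x / x <= delta y / y) /\
  (forall x y, 0 < x -> x <= y -> y <= 1 -> delta y / (y ^+ 2) <= delta x / (x ^+ 2)).

(* S_delta; note that in MathComp 0^-1 = 0, hence 0/0 = 0 as in the paper. *)
Definition S_delta (delta : R -> R) (x y : R) : R :=
  if y <= x then y * delta x / x else x * delta y / y.

Definition lam := (@lebesgue_measure R).

Definition gini_gamma (C : R -> R -> R) : \bar R :=
  (4%:E * \int[lam]_(x in `[0%R, 1%R]) (C x x)%:E
   + 4%:E * \int[lam]_(x in `[0%R, 1%R]) (C x (1 - x))%:E - 2%:E)%E.

Definition spearman_footrule (C : R -> R -> R) : \bar R :=
  (6%:E * \int[lam]_(x in `[0%R, 1%R]) (C x x)%:E - 2%:E)%E.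

Definition blomqvist_beta (C : R -> R -> R) : R :=
  4 * C (1 / 2) (1 / 2) - 1.

End Defs.

(* Main.v *)
Require Import Defs.
From HB Require Import structures.
From mathcomp Require Import all_boot all_order all_algebra.
From mathcomp Require Import all_classical all_reals all_analysis.
From mathcomp Require Import ring lra measurable_realfun.
Import Order.TTheory GRing.Theory Num.Theory numFieldNormedType.Exports.
Local Open Scope classical_set_scope.
Local Open Scope ring_scope.

Section S.
Variable R : realType.
Lemma poly_FTC (f F : R -> R) (a b : R) : a < b ->
  continuous f -> (forall x : R, is_derive x (1:R) F (f x)) ->
  (\int[@lam R]_(x in `[a, b]) (f x)%:E = (F b)%:E - (F a)%:E)%E.
Proof.
move=> ab cf dF.
have cF : continuous F.
  move=> x; case: (dF x) => + _ => /derivable1_diffP.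
  exact: differentiable_continuous.
apply: continuous_FTC2 => //.
- by apply: continuous_subspaceT.
- split.
  + by move=> x _; case: (dF x).
  + by apply: cvg_at_right_filter; apply: cF.
  + by apply: cvg_at_left_filter; apply: cF.
- by move=> x _; rewrite derive1E; case: (dF x).
Qed.
Lemma dF1 (x : R) : is_derive x (1:R) ((1/2:R) \*: (@id R ^+ 2)) (id x).
Proof.
apply: is_derive_eq.
by rewrite /= scalerA /GRing.scale /= mulr1 expr1; field.
Qed.
Lemma dF2 (x : R) : is_derive x (1:R) ((1/3:R) \*: (@id R ^+ 3)) (x ^+ 2).
Proof.
apply: is_derive_eq.
by rewrite /= scalerA /GRing.scale /= mulr1 mulrA div1r mulVf ?mul1r // pnatr_eq0.
Qed.
Lemma int_id (a b : R) : a < b ->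
  (\int[@lam R]_(x in `[a, b]) x%:E = ((b ^+ 2 - a ^+ 2) / 2)%:E)%E.
Proof.
move=> ab.
rewrite (@poly_FTC id _ a b ab _ dF1) //.
by rewrite -EFinB; congr EFin; rewrite /= /GRing.scale /= !exprfctE; field.
by move=> x; apply: cvg_id.
Qed.
Lemma int_sq (a b : R) : a < b ->
  (\int[@lam R]_(x in `[a, b]) (x ^+ 2)%:E = ((b ^+ 3 - a ^+ 3) / 3)%:E)%E.
Proof.
move=> ab.
rewrite (@poly_FTC (fun x => x ^+ 2) _ a b ab _ dF2) //.
  by rewrite -EFinB; congr EFin; rewrite /= /GRing.scale /= !exprfctE; field.
by move=> x; apply: (@continuousM _ R (fun x => x) (fun x => x)); apply: cvg_id.
Qed.

Lemma int_one (a b : R) : a < b ->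
  (\int[@lam R]_(x in `[a, b]) (1:R)%:E = (b - a)%:E)%E.
Proof.
move=> ab.
have d : forall x : R, is_derive x (1:R) (@id R) ((fun _ => (1:R)) x).
  by move=> x; apply: is_derive_id.
rewrite (@poly_FTC (fun _ => 1) _ a b ab _ d) //.
by move=> x; apply: cvg_cst.
Qed.

Lemma dF3 (x : R) : is_derive x (1:R) (@id R ^+ 2) (2 * x).
Proof.
apply: is_derive_eq.
by rewrite /= /GRing.scale /= mulr1 expr1.
Qed.

Lemma int_2id (a b : R) : a < b ->
  (\int[@lam R]_(x in `[a, b]) (2 * x)%:E = (b ^+ 2 - a ^+ 2)%:E)%E.
Proof.
move=> ab.
rewrite (@poly_FTC (fun x => 2 * x) _ a b ab _ dF3) //.
by move=> x; apply: (@continuousM _ R (fun _ => 2) (fun x => x)); [apply: cvg_cst|apply: cvg_id].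
Qed.

Lemma mono_meas (a b : R) (f : R -> R) : a <= b ->
  (forall x y, a <= x -> x <= y -> y <= b -> f x <= f y) -> measurable_fun `[a, b] f.
Proof.
move=> ab mf.
pose c x := if x <= a then a else if x <= b then x else b.
have ca x : a <= c x /\ c x <= b.
  rewrite /c; case: (leP x a) => xa; first by split; lra.
  by case: (leP x b) => xb; split; lra.
have cm : {homo c : x y / x <= y}.
  move=> x y xy; rewrite /c.
  case: (leP x a) => xa; case: (leP y a) => ya; try lra;
  case: (leP x b) => xb; case: (leP y b) => yb; lra.
apply: (@eq_measurable_fun _ _ _ _ _ (f \o c)).
  move=> x; rewrite inE /= in_itv /= => /andP[xa xb].
  rewrite /= /c; case: (leP x a) => h; last by rewrite xb.
by have -> : x = a by apply/eqP; rewrite eq_le h xa.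
apply: nondecreasing_measurable => // x y xy /=.
have [h1 h2] := ca x; have [h3 h4] := ca y.
by apply: mf => //; apply: cm.
Qed.

Lemma anti_meas (a b : R) (f : R -> R) : a <= b ->
  (forall x y, a <= x -> x <= y -> y <= b -> f y <= f x) -> measurable_fun `[a, b] f.
Proof.
move=> ab mf; rewrite -(opprK f); apply/measurable_funN.
by apply: mono_meas => // x y ax xy yb /=; rewrite lerN2; apply: mf.
Qed.

Lemma split_int (f : R -> \bar R) : measurable_fun (`[0, 1] : set R) f ->
  (forall x, 0 <= x -> x <= 1 -> (0 <= f x)%E) ->
  (\int[@lam R]_(x in `[0%R, 1%R]) f x = \int[@lam R]_(x in `[0%R, (1 / 2)%R]) f x
     + \int[@lam R]_(x in `[(1 / 2)%R, 1%R]) f x)%E.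
Proof.
move=> mf f0.
have E : (`[0, 1]%classic : set R) = `[0, 1 / 2[%classic `|` `[1 / 2, 1]%classic.
  by rewrite (@itv_bndbnd_setU _ _ _ (BLeft (1 / 2))) // bnd_simp; lra.
rewrite E ge0_integral_setU //; first last.
- rewrite disj_set2E; apply/eqP; rewrite -subset0 => x [] /=.
  by rewrite !in_itv /= => /andP[_ h1] /andP[h2 _]; have := le_lt_trans h2 h1; rewrite ltxx.
- by rewrite -E => x /=; rewrite in_itv /= => /andP[h1 h2]; apply: f0.
- by rewrite -E.
congr (_ + _)%E; apply: integral_itv_bndo_bndc.
apply: (measurable_funS _ _ mf) => //.
by move=> x /=; rewrite !in_itv /= => /andP[h1 h2]; apply/andP; split; lra.
Qed.


Lemma dfacts (delta : R -> R) : in_DLSL delta -> forall x : R, 0 <= x -> x <= 1 ->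
  [/\ 0 <= delta x, delta x <= x & x ^+ 2 <= delta x].
Proof.
move=> [[d01 [dle [d1 [dmono dlip]]]] [dinc dsq]] x x0 x1.
have x01 : 0 <= x <= 1 by apply/andP; split.
have [h0 _] := andP (d01 x x01).
split; [by [] | by apply: dle |].
have [x0e|xn0] := eqVneq x 0; first by rewrite {1}x0e expr2 mul0r.
have xp : 0 < x by rewrite lt_def xn0 x0.
have := dsq x 1 xp x1 (lexx 1); rewrite d1 expr1n divr1 ler_pdivlMr ?exprn_gt0 //.
by rewrite mul1r.
Qed.

Lemma dratio (delta : R -> R) : in_DLSL delta -> forall x : R, 0 < x -> x <= 1 ->
  x <= delta x / x /\ delta x / x <= 1.
Proof.
move=> hd x x0 x1; have [h0 h1 h2] := @dfacts delta hd x (ltW x0) x1.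
rewrite ler_pdivlMr // ler_pdivrMr // mul1r; split => //.
Qed.

Lemma sdiag (delta : R -> R) : in_DLSL delta -> forall x : R, 0 <= x -> x <= 1 ->
  S_delta delta x x = delta x.
Proof.
move=> hd x x0 x1; rewrite /S_delta lexx.
have [->|xn0] := eqVneq x 0.
  have [h0 h1 _] := @dfacts delta hd 0 (lexx 0) ler01.
  have -> : delta 0 = 0 by apply/eqP; rewrite eq_le h0 h1.
  by rewrite mul0r mul0r.
by rewrite mulrC mulrA mulVf ?mul1r.
Qed.

Lemma bound_real (I : \bar R) (a b : R) : (a%:E <= I)%E -> (I <= b%:E)%E ->
  exists r : R, I = r%:E /\ a <= r <= b.
Proof.
case: I => [r| |] //= ha hb; exists r; split => //.
by rewrite -!lee_fin ha hb.
Qed.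


Lemma meas_sub (f : R -> R) (a b c d : R) : c <= a -> b <= d ->
  measurable_fun (`[c, d] : set R) f -> measurable_fun (`[a, b] : set R) f.
Proof.
move=> ca bd mf; apply: (measurable_funS _ _ mf) => //.
move=> x /=; rewrite !in_itv /= => /andP[h1 h2]; apply/andP; split.
  exact: le_trans ca h1.
exact: le_trans h2 bd.
Qed.

Lemma setE01 : (`[0, 1]%classic : set R) = `[0, 1 / 2[%classic `|` `[1 / 2, 1]%classic.
Proof. by rewrite (@itv_bndbnd_setU _ _ _ (BLeft (1 / 2))) // bnd_simp; lra. Qed.

Lemma S_ge0 (delta : R -> R) : in_DLSL delta -> forall x y : R, 0 <= x -> x <= 1 ->
  0 <= y -> y <= 1 -> 0 <= S_delta delta x y.
Proof.
move=> hd x y x0 x1 y0 y1; rewrite /S_delta.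
have [hx _ _] := @dfacts delta hd x x0 x1.
have [hy _ _] := @dfacts delta hd y y0 y1.
by case: ifP => _; apply: divr_ge0 => //; apply: mulr_ge0.
Qed.

End S.

Theorem mainTheorem12 (R : realType) (delta : R -> R) :
  in_DLSL delta ->
  gini_gamma (S_delta delta) =
    (4%:E * \int[@lam R]_(x in `[0%R, (1 / 2)%R]) (delta x + x * (delta (1 - x) / (1 - x)))%:E
     + 4%:E * \int[@lam R]_(x in `[(1 / 2)%R, 1%R]) (delta x / x)%:E - 2%:E)%E /\
  spearman_footrule (S_delta delta) =
    (6%:E * \int[@lam R]_(x in `[0%R, 1%R]) (delta x)%:E - 2%:E)%E /\
  blomqvist_beta (S_delta delta) = 4 * delta (1 / 2) - 1 /\
  (0 <= gini_gamma (S_delta delta) <= 1)%E /\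
  (0 <= spearman_footrule (S_delta delta) <= 1)%E /\
  0 <= blomqvist_beta (S_delta delta) <= 1.
Proof.
move=> hd.
have hd' := hd.
move: hd' => [[d01 [dle [d1 [dmono dlip]]]] [dinc dsq]].
have F (x : R) : 0 <= x -> x <= 1 -> [/\ 0 <= delta x, delta x <= x & x ^+ 2 <= delta x].
  exact: (@dfacts R delta hd x).
have Rt (x : R) : 0 < x -> x <= 1 -> x <= delta x / x /\ delta x / x <= 1.
  exact: (@dratio R delta hd x).
pose u (x : R) := delta (1 - x) / (1 - x).
have md : measurable_fun (`[0%R, 1%R] : set R) delta.
  apply: mono_meas; first exact: ler01.
  by move=> x y x0 xy y1; apply: dmono.
have md1 : measurable_fun (`[0%R, (1/2)%R] : set R) delta.
  by apply: (@meas_sub R delta _ _ 0 1 _ _ md); lra.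
have md2 : measurable_fun (`[(1/2)%R, 1%R] : set R) delta.
  by apply: (@meas_sub R delta _ _ 0 1 _ _ md); lra.
have mu : measurable_fun (`[0%R, (1/2)%R] : set R) u.
  apply: anti_meas; first lra.
  by move=> x y x0 xy y1; rewrite /u; apply: dinc; lra.
have mv : measurable_fun (`[(1/2)%R, 1%R] : set R) (fun x => delta x / x).
  apply: mono_meas; first lra.
  by move=> x y x0 xy y1; apply: dinc; lra.
have mxu : measurable_fun (`[0%R, (1/2)%R] : set R) (fun x => x * u x).
  by apply: measurable_funM.
have mxv : measurable_fun (`[(1/2)%R, 1%R] : set R) (fun x => (1 - x) * (delta x / x)).
  by apply: measurable_funM => //; apply: measurable_funB.
have u0 (x : R) : 0 <= x -> x <= 1/2 -> 0 <= u x.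
  move=> x0 x1; have [h _ _] := F (1 - x) ltac:(lra) ltac:(lra).
  by apply: divr_ge0 => //; lra.
have v0 (x : R) : 1/2 <= x -> x <= 1 -> 0 <= delta x / x.
  move=> x0 x1; have [h _ _] := F x ltac:(lra) ltac:(lra).
  by apply: divr_ge0 => //; lra.
have e1 : (\int[@lam R]_(x in `[0%R, 1%R]) (S_delta delta x x)%:E =
    \int[@lam R]_(x in `[0%R, 1%R]) (delta x)%:E)%E.
  apply: eq_integral => x; rewrite inE /= in_itv /= => /andP[x0 x1].
  by rewrite (@sdiag R delta hd x x0 x1).
have e2 : (\int[@lam R]_(x in `[0%R, 1%R]) (S_delta delta x (1 - x))%:E =
    \int[@lam R]_(x in `[0%R, (1/2)%R]) (x * u x)%:E +
    \int[@lam R]_(x in `[(1/2)%R, 1%R]) ((1 - x) * (delta x / x))%:E)%E.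
  rewrite split_int; first last.
  - move=> x x0 x1; rewrite lee_fin; apply: (@S_ge0 R delta hd) => //; lra.
  - apply/measurable_EFinP; rewrite setE01; apply/measurable_funU => //; split.
    + apply: (eq_measurable_fun (fun x : R => x * u x)).
        move=> x; rewrite inE /= in_itv /= => /andP[x0 x1].
        rewrite /S_delta /u ifF ?mulrA //.
        by apply/negbTE; rewrite -ltNge; lra.
      apply: (measurable_funS _ _ mxu) => //.
      by move=> x /=; rewrite !in_itv /= => /andP[h1 h2]; apply/andP; split; lra.
    + apply: (eq_measurable_fun (fun x : R => (1 - x) * (delta x / x))).
        move=> x; rewrite inE /= in_itv /= => /andP[x0 x1].
        by rewrite /S_delta ifT ?mulrA //; lra.
      exact: mxv.
  congr (_ + _)%E; apply: eq_integral => x; rewrite inE /= in_itv /= => /andP[x0 x1];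
    rewrite /S_delta /u.
  - case: ifPn => hx; last by rewrite mulrA.
    have xh : x = 1 / 2 by lra.
    rewrite xh; have -> : 1 - 1 / 2 = 1 / 2 :> R by field.
    by rewrite mulrA.
  - case: ifPn => hx; first by rewrite mulrA.
    by move: hx; rewrite -ltNge => hx; exfalso; lra.
have e3 := @split_int R (fun x => (delta x)%:E).
rewrite /= in e3.
have e4 : (\int[@lam R]_(x in `[0%R, (1 / 2)%R]) (delta x + x * (delta (1 - x) / (1 - x)))%:E =
    \int[@lam R]_(x in `[0%R, (1/2)%R]) (delta x)%:E +
    \int[@lam R]_(x in `[0%R, (1/2)%R]) (x * u x)%:E)%E.
  rewrite -ge0_integralD //.
  - by move=> x /=; rewrite in_itv /= => /andP[x0 x1]; have [h _ _] := F x x0 ltac:(lra).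
  - by apply/measurable_EFinP.
  - by move=> x /=; rewrite in_itv /= => /andP[x0 x1]; rewrite lee_fin mulr_ge0 // u0.
  - by apply/measurable_EFinP.
have e5 : (\int[@lam R]_(x in `[(1 / 2)%R, 1%R]) (delta x / x)%:E =
    \int[@lam R]_(x in `[(1/2)%R, 1%R]) (delta x)%:E +
    \int[@lam R]_(x in `[(1/2)%R, 1%R]) ((1 - x) * (delta x / x))%:E)%E.
  rewrite -ge0_integralD //.
  - apply: eq_integral => x; rewrite inE /= in_itv /= => /andP[x0 x1].
    rewrite -EFinD; congr EFin; field; lra.
  - by move=> x /=; rewrite in_itv /= => /andP[x0 x1]; have [h _ _] := F x ltac:(lra) x1.
  - by apply/measurable_EFinP.
  - by move=> x /=; rewrite in_itv /= => /andP[x0 x1]; rewrite lee_fin mulr_ge0 ?v0 //; lra.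
  - by apply/measurable_EFinP.
have eg : gini_gamma (S_delta delta) =
    (4%:E * \int[@lam R]_(x in `[0%R, (1 / 2)%R]) (delta x + x * (delta (1 - x) / (1 - x)))%:E
     + 4%:E * \int[@lam R]_(x in `[(1 / 2)%R, 1%R]) (delta x / x)%:E - 2%:E)%E.
  rewrite /gini_gamma e1 e2 e3; last 2 first.
  - by apply/measurable_EFinP.
  - by move=> x x0 x1; have [h _ _] := F x x0 x1.
  rewrite e4 e5.
  have iA1 : (0 <= \int[@lam R]_(x in `[0%R, (1/2)%R]) (delta x)%:E)%E.
    apply: integral_ge0 => x /=; rewrite in_itv /= => /andP[x0 x1].
    by rewrite lee_fin; have [h _ _] := F x x0 ltac:(lra).
  have iA2 : (0 <= \int[@lam R]_(x in `[(1/2)%R, 1%R]) (delta x)%:E)%E.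
    apply: integral_ge0 => x /=; rewrite in_itv /= => /andP[x0 x1].
    by rewrite lee_fin; have [h _ _] := F x ltac:(lra) x1.
  have iB1 : (0 <= \int[@lam R]_(x in `[0%R, (1/2)%R]) (x * u x)%:E)%E.
    apply: integral_ge0 => x /=; rewrite in_itv /= => /andP[x0 x1].
    by rewrite lee_fin mulr_ge0 // u0.
  have iB2 : (0 <= \int[@lam R]_(x in `[(1/2)%R, 1%R]) ((1 - x) * (delta x / x))%:E)%E.
    apply: integral_ge0 => x /=; rewrite in_itv /= => /andP[x0 x1].
    by rewrite lee_fin mulr_ge0 ?v0 // subr_ge0.
  rewrite (ge0_muleDr _ iA1 iA2) (ge0_muleDr _ iB1 iB2).
  by rewrite (ge0_muleDr _ iA1 iB1) (ge0_muleDr _ iA2 iB2) addeACA.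
have ep : spearman_footrule (S_delta delta) =
    (6%:E * \int[@lam R]_(x in `[0%R, 1%R]) (delta x)%:E - 2%:E)%E.
  by rewrite /spearman_footrule e1.
have eb : blomqvist_beta (S_delta delta) = 4 * delta (1 / 2) - 1.
  by rewrite /blomqvist_beta (@sdiag R delta hd) //; lra.
split; first exact: eg.
split; first exact: ep.
split; first exact: eb.
have [h0 h1 h2] := F (1/2) ltac:(lra) ltac:(lra).
split; last split; last first.
- by rewrite eb; apply/andP; split; nra.
-
  have lo : ((1/3)%:E <= \int[@lam R]_(x in `[0%R, 1%R]) (delta x)%:E)%E.
    have <- : (\int[@lam R]_(x in `[0%R, 1%R]) (x ^+ 2)%:E = (1/3)%:E)%E.
      by rewrite int_sq ?ltr01 //; congr EFin; field.
    apply: ge0_le_integral => //.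
    + by move=> x /=; rewrite in_itv /= => /andP[x0 x1]; rewrite lee_fin sqr_ge0.
    + by apply/measurable_EFinP; apply: measurable_funM.
    + by apply/measurable_EFinP.
    + by move=> x /=; rewrite in_itv /= => /andP[x0 x1]; rewrite lee_fin; have [_ _ h] := F x x0 x1.
  have hi : (\int[@lam R]_(x in `[0%R, 1%R]) (delta x)%:E <= (1/2)%:E)%E.
    have <- : (\int[@lam R]_(x in `[0%R, 1%R]) x%:E = (1/2)%:E)%E.
      by rewrite int_id ?ltr01 //; congr EFin; field.
    apply: ge0_le_integral => //.
    + by move=> x /=; rewrite in_itv /= => /andP[x0 x1]; rewrite lee_fin; have [h _ _] := F x x0 x1.
    + by apply/measurable_EFinP.
  rewrite ep; have [r [-> /andP[r1 r2]]] := @bound_real R _ _ _ lo hi.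
  rewrite -EFinM -EFinB !lee_fin; apply/andP; split; lra.
-
  have g1b (x : R) : 0 <= x -> x <= 1/2 ->
      x <= delta x + x * (delta (1 - x) / (1 - x)) /\
      delta x + x * (delta (1 - x) / (1 - x)) <= 2 * x.
    move=> x0 x1.
    have [hx0 hx1 hx2] := F x x0 ltac:(lra).
    have [w1 w2] := Rt (1 - x) ltac:(lra) ltac:(lra).
    move: w1 w2; set w := delta (1 - x) / (1 - x) => w1 w2.
    by split; nra.
  have g2b (x : R) : 1/2 <= x -> x <= 1 -> x <= delta x / x /\ delta x / x <= 1.
    by move=> x0 x1; apply: Rt => //; lra.
  have mg1 : measurable_fun (`[0%R, (1/2)%R] : set R)
      (fun x => delta x + x * (delta (1 - x) / (1 - x))).
    by apply: measurable_funD.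
  have lo1 : ((1/8)%:E <= \int[@lam R]_(x in `[0%R, (1 / 2)%R])
      (delta x + x * (delta (1 - x) / (1 - x)))%:E)%E.
    have <- : (\int[@lam R]_(x in `[0%R, (1/2)%R]) x%:E = (1/8)%:E)%E.
      by rewrite int_id; [congr EFin; field | lra].
    apply: ge0_le_integral => //;
      try (by apply/measurable_EFinP);
      try (by move=> x /=; rewrite in_itv /= => /andP[x0 x1]; rewrite lee_fin);
      by move=> x /=; rewrite in_itv /= => /andP[x0 x1]; rewrite lee_fin; have [] := g1b x x0 x1.
  have hi1 : (\int[@lam R]_(x in `[0%R, (1 / 2)%R])
      (delta x + x * (delta (1 - x) / (1 - x)))%:E <= (1/4)%:E)%E.
    have <- : (\int[@lam R]_(x in `[0%R, (1/2)%R]) (2 * x)%:E = (1/4)%:E)%E.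
      by rewrite int_2id; [congr EFin; field | lra].
    apply: ge0_le_integral => //;
      try (by apply/measurable_EFinP);
      try (by apply/measurable_EFinP; apply: measurable_funM);
      try (by move=> x /=; rewrite in_itv /= => /andP[x0 x1]; rewrite lee_fin; have [] := g1b x x0 x1; lra);
      by move=> x /=; rewrite in_itv /= => /andP[x0 x1]; rewrite lee_fin; have [] := g1b x x0 x1.
  have lo2 : ((3/8)%:E <= \int[@lam R]_(x in `[(1 / 2)%R, 1%R]) (delta x / x)%:E)%E.
    have <- : (\int[@lam R]_(x in `[(1/2)%R, 1%R]) x%:E = (3/8)%:E)%E.
      by rewrite int_id; [congr EFin; field | lra].
    apply: ge0_le_integral => //;
      try (by apply/measurable_EFinP);
      try (by move=> x /=; rewrite in_itv /= => /andP[x0 x1]; rewrite lee_fin; lra);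
      by move=> x /=; rewrite in_itv /= => /andP[x0 x1]; rewrite lee_fin; have [] := g2b x x0 x1.
  have hi2 : (\int[@lam R]_(x in `[(1 / 2)%R, 1%R]) (delta x / x)%:E <= (1/2)%:E)%E.
    have <- : (\int[@lam R]_(x in `[(1/2)%R, 1%R]) (1:R)%:E = (1/2)%:E)%E.
      by rewrite int_one; [congr EFin; field | lra].
    apply: ge0_le_integral => //;
      try (by apply/measurable_EFinP);
      try (by move=> x /=; rewrite in_itv /= => /andP[x0 x1]; rewrite lee_fin v0);
      by move=> x /=; rewrite in_itv /= => /andP[x0 x1]; rewrite lee_fin; have [] := g2b x x0 x1.
  rewrite eg.
  have [r1 [-> /andP[r11 r12]]] := @bound_real R _ _ _ lo1 hi1.
  have [r2 [-> /andP[r21 r22]]] := @bound_real R _ _ _ lo2 hi2.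
  rewrite -!EFinM.
  have -> : ((4 * r1)%:E + (4 * r2)%:E - 2%:E = (4 * r1 + 4 * r2 - 2)%:E)%E by [].
  rewrite !lee_fin; apply/andP; split; lra.
Qed.
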